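(* Let $E\in\mathcal E^{m,n}_{a,b}$, $A\subseteq[m]$ and $B\subseteq[n]$, and let $E'=E\cup(A\times[n])\cup([m]\times B)$. Then $E'\in\mathcal E^{m,n}_{a',b'}$, where $a'=\min(a+|A|,m)$ and $b'=\min(b+|B|,n)$.
   Context: For an $(m,m-a)$-code $C_1$ and an $(n,n-b)$-code $C_2$, the tensor code $C_1\otimes C_2$ consists of $m\times n$ arrays whose columns lie in $C_1$ and rows in $C_2$. An erasure pattern $E\subseteq[m]\times[n]$ is correctable if every codeword is determined by its entries outside $E$. $\mathcal E^{m,n}_{a,b}$ (over a fixed field characteristic) is the set of patterns $E\subseteq[m]\times[n]$ correctable by an $(m,n,a,b)$-maximally recoverable tensor code, i.e. by $C_1\otimes C_2$ where $C_1,C_2$ have generic generator matrices of sizes $(m-a)\times m$ and $(n-b)\times n$; when $a=m$ or $b=n$ the code is zero and every pattern is correctable. *)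

(* Defs.v *)
From HB Require Import structures.
From mathcomp Require Import all_boot all_order all_algebra.
From mathcomp Require Import mpoly fraction.
Set Implicit Arguments. Unset Strict Implicit. Unset Printing Implicit Defensive.
Import GRing.Theory.
Local Open Scope ring_scope.

(* The tensor code C1 (x) C2, where C1 is the row space of G1 (length m) and
   C2 is the row space of G2 (length n): m x n arrays whose columns lie in C1
   and whose rows lie in C2. *)
Definition in_tensor_code (K : fieldType) (m n k1 k2 : nat)
  (G1 : 'M[K]_(k1, m)) (G2 : 'M[K]_(k2, n)) (M : 'M[K]_(m, n)) : Prop :=
  (forall j : 'I_n, ((col j M)^T <= G1)%MS) /\ (forall i : 'I_m, (row i M <= G2)%MS).

Definition correctable (K : fieldType) (m n k1 k2 : nat)
  (G1 : 'M[K]_(k1, m)) (G2 : 'M[K]_(k2, n)) (E : {set 'I_m * 'I_n}) : Prop :=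
  forall M1 M2 : 'M[K]_(m, n),
    in_tensor_code G1 G2 M1 -> in_tensor_code G1 G2 M2 ->
    (forall (i : 'I_m) (j : 'I_n), (i, j) \notin E -> M1 i j = M2 i j) ->
    M1 = M2.

(* Number of indeterminates: one per entry of G1 and of G2. *)
Definition nvars (m n a b : nat) : nat := ((m - a) * m + (n - b) * n)%N.

Definition genField (F : fieldType) (m n a b : nat) : fieldType :=
  {fraction {mpoly F[nvars m n a b]}}.

Definition genG1 (F : fieldType) (m n a b : nat) : 'M[genField F m n a b]_(m - a, m) :=
  \matrix_(i, j)
    (@FracField.tofrac _ ('X_(lshift ((n - b) * n) (mxvec_index i j)) : {mpoly F[nvars m n a b]})).

Definition genG2 (F : fieldType) (m n a b : nat) : 'M[genField F m n a b]_(n - b, n) :=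
  \matrix_(i, j)
    (@FracField.tofrac _ ('X_(rshift ((m - a) * m) (mxvec_index i j)) : {mpoly F[nvars m n a b]})).

(* E \in \mathcal E^{m,n}_{a,b} over the characteristic of F: correctable by the
   (m,n,a,b)-maximally recoverable tensor code, i.e. C1 (x) C2 with generic
   generator matrices of sizes (m-a) x m and (n-b) x n. *)
Definition MR_correctable (F : fieldType) (m n a b : nat) (E : {set 'I_m * 'I_n}) : Prop :=
  correctable (genG1 F m n a b) (genG2 F m n a b) E.
Arguments MR_correctable F m n a b E : clear implicits.

(* Main.v *)
Require Import Defs.
From HB Require Import structures.
From mathcomp Require Import all_boot all_order all_algebra.
From mathcomp Require Import mpoly fraction zify.
Set Implicit Arguments. Unset Strict Implicit. Unset Printing Implicit Defensive.
Import GRing.Theory.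
Local Open Scope ring_scope.

Definition Phi (R : comPzRingType) (k1 k2 m n : nat) (G1 : 'M[R]_(k1, m)) (G2 : 'M[R]_(k2, n))
  : 'M[R]_(k1 * k2, m * n) :=
  @lin_mulmx R m k1 k2 G1^T *m @lin_mulmxr R m k2 n G2.

Lemma Phi_vec (R : comPzRingType) (k1 k2 m n : nat) (G1 : 'M[R]_(k1, m)) (G2 : 'M[R]_(k2, n)) X :
  mxvec X *m Phi G1 G2 = mxvec (G1^T *m X *m G2).
Proof. by rewrite /Phi mulmxA /lin_mulmx mul_vec_lin /lin_mulmxr mul_vec_lin. Qed.

Lemma map_Phi (R S : comPzRingType) (f : {rmorphism R -> S}) (k1 k2 m n : nat)
  (G1 : 'M[R]_(k1, m)) (G2 : 'M[R]_(k2, n)) :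
  map_mx f (Phi G1 G2) = Phi (map_mx f G1) (map_mx f G2).
Proof.
rewrite /Phi map_mxM /lin_mulmx /lin_mulmxr.
rewrite (map_lin_mx (gf := mulmx (map_mx f G1)^T)); last first.
  by move=> X; rewrite map_mxM map_trmx.
rewrite (map_lin_mx (gf := mulmxr (map_mx f G2))) //.
by move=> X /=; rewrite map_mxM.
Qed.

Definition outidx (m n : nat) (E : {set 'I_m * 'I_n}) (k : 'I_#|~: E|) : 'I_(m * n) :=
  mxvec_index (enum_val k).1 (enum_val k).2.

Definition PhiO (R : comPzRingType) (k1 k2 m n : nat) (E : {set 'I_m * 'I_n})
  (G1 : 'M[R]_(k1, m)) (G2 : 'M[R]_(k2, n)) := colsub (@outidx m n E) (Phi G1 G2).

Section Lin.
Variable K : fieldType.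

Lemma tensor_rep k1 k2 m n (G1 : 'M[K]_(k1, m)) (G2 : 'M[K]_(k2, n)) M :
  in_tensor_code G1 G2 M -> exists X, M = G1^T *m X *m G2.
Proof.
case=> Hc Hr.
have /submxP [Y HY] : (M^T <= G1)%MS.
  by apply/row_subP => j; rewrite -tr_col.
have HM : (M <= G2)%MS by apply/row_subP.
exists (Y^T *m pinvmx G2).
rewrite -(mulmxKpV HM) -mulmxA.
have -> : M = G1^T *m Y^T by rewrite -trmx_mul -HY trmxK.
by rewrite !mulmxA.
Qed.

Lemma rep_code k1 k2 m n (G1 : 'M[K]_(k1, m)) (G2 : 'M[K]_(k2, n)) X :
  in_tensor_code G1 G2 (G1^T *m X *m G2).
Proof.
split=> [j|i].
  by rewrite tr_col !trmx_mul trmxK row_mul mulmxA submxMl.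
by rewrite row_mul submxMl.
Qed.

Lemma code0 k1 k2 m n (G1 : 'M[K]_(k1, m)) (G2 : 'M[K]_(k2, n)) :
  in_tensor_code G1 G2 0.
Proof. by split=> [j|i]; rewrite ?col0 ?row0 ?linear0 sub0mx. Qed.

Lemma PhiO_entry k1 k2 m n (E : {set 'I_m * 'I_n}) (G1 : 'M[K]_(k1, m)) (G2 : 'M[K]_(k2, n))
  X (k : 'I_#|~: E|) :
  (mxvec X *m PhiO E G1 G2) 0 k = (G1^T *m X *m G2) (enum_val k).1 (enum_val k).2.
Proof.
rewrite -[RHS]mxvecE -Phi_vec !mxE; apply: eq_bigr => r _; rewrite mxE. by [].
Qed.

Lemma suff_corr k1 k2 m n (E : {set 'I_m * 'I_n}) (G1 : 'M[K]_(k1, m)) (G2 : 'M[K]_(k2, n)) :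
  row_free (PhiO E G1 G2) -> correctable G1 G2 E.
Proof.
move=> Hf M1 M2 /tensor_rep [X1 ->] /tensor_rep [X2 ->] Hag.
suff -> : X1 = X2 by [].
apply/eqP; rewrite -subr_eq0 -mxvec_eq0 -(mulmx_free_eq0 _ Hf); apply/eqP/rowP => k.
rewrite [RHS]mxE linearB /= mulmxBl [LHS]mxE [X in _ + X]mxE !PhiO_entry Hag ?subrr //.
by rewrite -surjective_pairing; have := enum_valP k; rewrite inE.
Qed.

Lemma nec_corr k1 k2 m n (E : {set 'I_m * 'I_n}) (G1 : 'M[K]_(k1, m)) (G2 : 'M[K]_(k2, n)) :
  row_free G1 -> row_free G2 -> correctable G1 G2 E -> row_free (PhiO E G1 G2).
Proof.
move=> F1 F2 Hc.
suff Hinj : forall x : 'rV_(k1 * k2), x *m PhiO E G1 G2 = 0 -> x = 0.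
  rewrite -kermx_eq0; apply/eqP/row_matrixP => i.
  by rewrite row0; apply: Hinj; rewrite -row_mul mulmx_ker row0.
move=> x Hx; rewrite -(vec_mxK x); set X := vec_mx x.
have HM : G1^T *m X *m G2 = 0.
  apply: Hc; [exact: rep_code | exact: code0 |] => i j Hij.
  have Hin : (i, j) \in ~: E by rewrite inE.
  have := PhiO_entry G1 G2 X (enum_rank_in Hin (i, j)).
  rewrite enum_rankK_in // vec_mxK Hx !mxE => <-. by [].
have /row_freeP [B HB] := F1.
have HX2 : X *m G2 = 0.
  have H1 : B^T *m G1^T = 1%:M by rewrite -trmx_mul HB trmx1.
  by rewrite -[X *m G2]mul1mx -H1 -(mulmxA B^T) (mulmxA G1^T) HM mulmx0.
have : X == 0 by rewrite -(mulmx_free_eq0 _ F2) HX2.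
by move/eqP ->; rewrite linear0.
Qed.

End Lin.

Lemma transfer (R : comNzRingType) (K1 K2 : fieldType) (f : {rmorphism R -> K1})
  (g : {rmorphism R -> K2}) (g_inj : injective g) p q (A : 'M[R]_(p, q)) :
  row_free (map_mx f A) -> row_free (map_mx g A).
Proof.
move=> H.
have Hfull : row_full (map_mx f A)^T by rewrite /row_full mxrank_tr.
have U := fullrowsub_unit Hfull.
set h := fullrankfun Hfull in U.
rewrite map_trmx -map_mxsub unitmxE unitfE det_map_mx in U.
have Hd : \det (rowsub h A^T) != 0.
  by apply: contraNneq U => ->; rewrite rmorph0.
have Ug : map_mx g (rowsub h A^T) \in unitmx.
  rewrite unitmxE unitfE det_map_mx; apply: contraNneq Hd => Hg.
  by apply/eqP; apply: g_inj; rewrite Hg rmorph0.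
rewrite -row_free_unit /row_free in Ug.
have E1 : rowsub h (map_mx g A)^T = map_mx g (rowsub h A^T) by rewrite map_trmx map_mxsub.
have := mxrankS (rowsub_sub h (map_mx g A)^T); rewrite E1 (eqP Ug) mxrank_tr => Hp.
by rewrite /row_free eqn_leq rank_leq_row.
Qed.

Lemma tofrac_inj (R : idomainType) : injective (@FracField.tofrac R).
Proof. by move=> x y /eqP; rewrite tofrac_eq => /eqP. Qed.

Lemma generic_rowfree (F : fieldType) (N k m : nat) (idx : 'I_k -> 'I_m -> 'I_N)
  (inj : forall i j i' j', idx i j = idx i' j' -> (i = i') /\ (j = j')) (km : (k <= m)%N) :
  row_free (map_mx (@FracField.tofrac _)
     (\matrix_(i, j) 'X_(idx i j) : 'M[{mpoly F[N]}]_(k, m))).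
Proof.
pose h : 'I_N -> F := fun l => ([exists i : 'I_k, l == idx i (widen_ord km i)])%:R.
apply: (transfer (f := meval h)); first exact: tofrac_inj.
have -> : map_mx (meval h) (\matrix_(i, j) 'X_(idx i j) : 'M[{mpoly F[N]}]_(k, m))
   = pid_mx k.
  apply/matrixP => i j; rewrite !mxE mevalXU /h ltn_ord andbT.
  case: existsP => [[i' /eqP /inj [<- ->]] | Hn] /=; first by rewrite eqxx.
  case: eqP => // Hij; exfalso; apply: Hn; exists i.
  by apply/eqP; congr idx; apply: val_inj.
by rewrite /row_free rank_pid_mx.
Qed.

Lemma shortenG (K : fieldType) k m (G : 'M[K]_(k, m)) (A : {set 'I_m}) a :
  row_free G -> k = (m - a)%N ->
  exists H : 'M[K]_(m - minn (a + #|A|) m, m),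
    [/\ row_free H, (H <= G)%MS & forall i j, j \in A -> H i j = 0].
Proof.
move=> FG Hk.
pose WA : 'M[K]_(m, #|A|) := \matrix_(j, l) (j == enum_val l)%:R.
pose S := (G :&: kermx WA)%MS.
have rS : (m - minn (a + #|A|) m <= \rank S)%N.
  have := mxrank_sum_cap G (kermx WA).
  have := rank_leq_col (G + kermx WA)%MS.
  have := rank_leq_col WA.
  rewrite mxrank_ker (eqP FG) -/S. lia.
pose H : 'M[K]_(m - minn (a + #|A|) m, m) := pid_mx (m - minn (a + #|A|) m) *m row_base S.
have HS : (H <= S)%MS by rewrite (submx_trans (submxMl _ _)) // eq_row_base.
exists H; split.
- by rewrite /row_free mxrankMfree ?row_base_free // rank_pid_mx.
- exact: submx_trans HS (capmxSl _ _).
- move=> i j Hj.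
  have /sub_kermxP HW : (H <= kermx WA)%MS by exact: submx_trans HS (capmxSr _ _).
  move/matrixP: HW => /(_ i (enum_rank_in Hj j)).
  rewrite [LHS]mxE [RHS]mxE => <-.
  have WAE : forall j0, WA j0 (enum_rank_in Hj j) = (j0 == j)%:R.
    by move=> j0; rewrite /WA mxE enum_rankK_in.
  rewrite (bigD1 j) //= WAE eqxx mulr1 big1 ?addr0 // => j' /negPf Hj'.
  by rewrite WAE Hj' mulr0.
Qed.

Lemma mxvec_index_inj m n (i i' : 'I_m) (j j' : 'I_n) :
  mxvec_index i j = mxvec_index i' j' -> i = i' /\ j = j'.
Proof. by rewrite /mxvec_index => /cast_ord_inj /enum_rank_inj [-> ->]. Qed.

Definition Gp1 (F : fieldType) m n a b : 'M[{mpoly F[nvars m n a b]}]_(m - a, m) :=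
  \matrix_(i, j) 'X_(lshift ((n - b) * n) (mxvec_index i j)).
Definition Gp2 (F : fieldType) m n a b : 'M[{mpoly F[nvars m n a b]}]_(n - b, n) :=
  \matrix_(i, j) 'X_(rshift ((m - a) * m) (mxvec_index i j)).

Lemma genG1E (F : fieldType) m n a b :
  genG1 F m n a b = map_mx (@FracField.tofrac _) (Gp1 F m n a b).
Proof. by apply/matrixP => i j; rewrite !mxE. Qed.
Lemma genG2E (F : fieldType) m n a b :
  genG2 F m n a b = map_mx (@FracField.tofrac _) (Gp2 F m n a b).
Proof. by apply/matrixP => i j; rewrite !mxE. Qed.

Lemma genG1_free (F : fieldType) m n a b : row_free (genG1 F m n a b).
Proof.
rewrite genG1E; apply: generic_rowfree; last exact: leq_subr.
by move=> i j i' j' /lshift_inj /mxvec_index_inj.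
Qed.
Lemma genG2_free (F : fieldType) m n a b : row_free (genG2 F m n a b).
Proof.
rewrite genG2E; apply: generic_rowfree; last exact: leq_subr.
by move=> i j i' j' /rshift_inj /mxvec_index_inj.
Qed.

Lemma code_mono (K : fieldType) k1 k2 l1 l2 m n (G1 : 'M[K]_(k1, m)) (G2 : 'M[K]_(k2, n))
  (H1 : 'M[K]_(l1, m)) (H2 : 'M[K]_(l2, n)) M :
  (H1 <= G1)%MS -> (H2 <= G2)%MS -> in_tensor_code H1 H2 M -> in_tensor_code G1 G2 M.
Proof.
move=> S1 S2 [Hc Hr]; split=> [j|i]; [exact: submx_trans (Hc j) S1 | exact: submx_trans (Hr i) S2].
Qed.

Lemma code_vanish_row (K : fieldType) k1 k2 m n (H1 : 'M[K]_(k1, m)) (H2 : 'M[K]_(k2, n))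
  (A : {set 'I_m}) M :
  (forall i j, j \in A -> H1 i j = 0) -> in_tensor_code H1 H2 M ->
  forall i j, i \in A -> M i j = 0.
Proof.
move=> HA [Hc _] i j Hi.
have /submxP [D HD] := Hc j.
have := congr1 (fun v : 'rV_m => v 0 i) HD.
rewrite /= !mxE => ->; apply: big1 => k _; by rewrite HA // mulr0.
Qed.

Lemma code_vanish_col (K : fieldType) k1 k2 m n (H1 : 'M[K]_(k1, m)) (H2 : 'M[K]_(k2, n))
  (B : {set 'I_n}) M :
  (forall i j, j \in B -> H2 i j = 0) -> in_tensor_code H1 H2 M ->
  forall i j, j \in B -> M i j = 0.
Proof.
move=> HB [_ Hr] i j Hj.
have /submxP [D HD] := Hr i.
have := congr1 (fun v : 'rV_n => v 0 j) HD.
rewrite /= !mxE => ->; apply: big1 => k _; by rewrite HB // mulr0.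
Qed.

Definition cF (F : fieldType) (N : nat) : F -> {fraction {mpoly F[N]}} :=
  (@FracField.tofrac _) \o (@mpolyC N F).

Theorem lemma3p17 (F : fieldType) (m n a b : nat) (E : {set 'I_m * 'I_n})
  (A : {set 'I_m}) (B : {set 'I_n}) :
  MR_correctable F m n a b E ->
  MR_correctable F m n (minn (a + #|A|) m) (minn (b + #|B|) n)
    (E :|: setX A [set: 'I_n] :|: setX [set: 'I_m] B).
Proof.
move=> Hyp.
set E' := (E :|: _ :|: _).
have [H1 [F1 S1 Z1]] := @shortenG _ _ _ (genG1 F m n a b) A a (genG1_free F m n a b) erefl.
have [H2 [F2 S2 Z2]] := @shortenG _ _ _ (genG2 F m n a b) B b (genG2_free F m n a b) erefl.
have HcH : correctable H1 H2 E'.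
  move=> M1 M2 C1 C2 Hag; apply: Hyp; [exact: code_mono C1 | exact: code_mono C2 |].
  move=> i j Hij.
  case: (boolP (i \in A)) => Hi.
    by rewrite (code_vanish_row Z1 C1) ?(code_vanish_row Z1 C2).
  case: (boolP (j \in B)) => Hj.
    by rewrite (code_vanish_col Z2 C1) ?(code_vanish_col Z2 C2).
  by apply: Hag; rewrite !inE /= andbT (negbTE Hij) (negbTE Hi) (negbTE Hj).
have FP := nec_corr F1 F2 HcH.
rewrite /MR_correctable; apply: suff_corr.
rewrite genG1E genG2E /PhiO -map_Phi -map_mxsub.
pose h : 'I_(nvars m n (minn (a + #|A|) m) (minn (b + #|B|) n)) -> genField F m n a b :=
  fun l => match @split ((m - minn (a + #|A|) m) * m) ((n - minn (b + #|B|) n) * n) l with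
           | inl l1 => mxvec H1 0 l1 | inr l2 => mxvec H2 0 l2 end.
apply: (transfer (f := mmap ((@FracField.tofrac {mpoly F[nvars m n a b]}) \o (@mpolyC (nvars m n a b) F)) h)); first exact: tofrac_inj.
rewrite map_mxsub map_Phi.
suff [-> ->] : map_mx (mmap ((@FracField.tofrac {mpoly F[nvars m n a b]}) \o (@mpolyC (nvars m n a b) F)) h) (Gp1 _ _ _ _ _) = H1 /\
               map_mx (mmap ((@FracField.tofrac {mpoly F[nvars m n a b]}) \o (@mpolyC (nvars m n a b) F)) h) (Gp2 _ _ _ _ _) = H2 by [].
split; apply/matrixP => i j; rewrite !mxE mmapX mmap1U /h.
  by rewrite (unsplitK (inl _ _)) mxvecE.
by rewrite (unsplitK (inr _ _)) mxvecE.
Qed.
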